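(* Let $X,Y$ be finite sets, let $A$ be an arbitrary $|X|\times|Y|$ matrix (possibly with complex entries) with rows indexed by $X$ and columns by $Y$, and let $\mathcal{R}$ be a rectangle partition of $X\times Y$. Then $$\|A\|_2^2\le\sum_{R\in\mathcal{R}}\|A_R\|_2^2.$$
   Context: A rectangle is a subset of $X\times Y$ of the form $X_0\times Y_0$ with $X_0\subseteq X$, $Y_0\subseteq Y$; a rectangle partition is a set of pairwise disjoint rectangles whose union is $X\times Y$. For a rectangle $R=X_0\times Y_0$, $A_R$ is the $|X_0|\times|Y_0|$ submatrix of $A$ with rows in $X_0$ and columns in $Y_0$. $\|\cdot\|_2$ denotes the spectral norm (largest singular value). *)

(* Defs.v *)
From mathcomp Require Import all_boot all_order all_algebra.
From mathcomp Require Import classical_sets reals complex.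
Set Implicit Arguments. Unset Strict Implicit. Unset Printing Implicit Defensive.
Import Order.TTheory GRing.Theory Num.Theory.
Local Open Scope ring_scope.

Definition vnorm2 (R : realType) (n : nat) (v : 'cV[R[i]]_n) : R :=
  \sum_(k < n) ((complex.Re (v k 0)) ^+ 2 + (complex.Im (v k 0)) ^+ 2).

(* Spectral norm ||M||_2 = operator norm induced by the Euclidean norm,
   sup_{||v||=1} ||M v||.  (sup of the empty set is 0, for n = 0.) *)
Definition specnorm (R : realType) (m n : nat) (M : 'M[R[i]]_(m, n)) : R :=
  sup [set Num.sqrt (vnorm2 (M *m v)) | v in [set v : 'cV[R[i]]_n | vnorm2 v = 1]]%classic.

Definition submx_of (R : realType) (X Y : finType) (A : X -> Y -> R[i])
    (X0 : {set X}) (Y0 : {set Y}) : 'M[R[i]]_(#|X0|, #|Y0|) :=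
  \matrix_(p < #|X0|, q < #|Y0|) A (enum_val p) (enum_val q).

Definition fullmx (R : realType) (X Y : finType) (A : X -> Y -> R[i]) :=
  submx_of A [set: X] [set: Y].

Definition rect (X Y : finType) (r : {set X} * {set Y}) : {set X * Y} :=
  finset.setX r.1 r.2.

Definition rect_partition (X Y : finType) (P : {set {set X} * {set Y}}) : Prop :=
  (forall r s, r \in P -> s \in P -> r != s -> [disjoint rect r & rect s]) /\
  \bigcup_(r in P) rect r = [set: X * Y].

(* Main.v *)
Require Import Defs.
From mathcomp Require Import all_boot all_order all_algebra.
From mathcomp Require Import classical_sets reals complex.
From mathcomp Require Import ring lra boolp.
Import Order.TTheory GRing.Theory Num.Theory.
Local Open Scope ring_scope.
Set Implicit Arguments. Unset Strict Implicit. Unset Printing Implicit Defensive.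

Section Aux.
Variable R : realType.
Implicit Types a b z : R[i].

Definition Nc (z : R[i]) : R := complex.Re z ^+ 2 + complex.Im z ^+ 2.
Definition ip (a b : R[i]) : R := complex.Re a * complex.Re b + complex.Im a * complex.Im b.

Lemma ReM a b : complex.Re (a * b) = complex.Re a * complex.Re b - complex.Im a * complex.Im b.
Proof. by case: a b => [a1 a2] [b1 b2]. Qed.
Lemma ImM a b : complex.Im (a * b) = complex.Re a * complex.Im b + complex.Im a * complex.Re b.
Proof. by case: a b => [a1 a2] [b1 b2]. Qed.

Lemma ReD a b : complex.Re (a + b) = complex.Re a + complex.Re b.
Proof. by case: a b => [a1 a2] [b1 b2]. Qed.
Lemma ImD a b : complex.Im (a + b) = complex.Im a + complex.Im b.
Proof. by case: a b => [a1 a2] [b1 b2]. Qed.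

Lemma Re_sum (I : Type) (r : seq I) (P : pred I) (F : I -> R[i]) :
  complex.Re (\sum_(i <- r | P i) F i) = \sum_(i <- r | P i) complex.Re (F i).
Proof. by apply: (big_morph (@complex.Re R)) => // -[x1 x2] [y1 y2]. Qed.
Lemma Im_sum (I : Type) (r : seq I) (P : pred I) (F : I -> R[i]) :
  complex.Im (\sum_(i <- r | P i) F i) = \sum_(i <- r | P i) complex.Im (F i).
Proof. by apply: (big_morph (@complex.Im R)) => // -[x1 x2] [y1 y2]. Qed.

Lemma Nc_ge0 z : 0 <= Nc z.
Proof. by rewrite /Nc addr_ge0 // sqr_ge0. Qed.

Lemma Nc_eq0 z : Nc z = 0 -> z = 0.
Proof.
case: z => a b; rewrite /Nc /= => h.
have ha : a = 0 by apply/eqP; rewrite -sqrf_eq0; apply/eqP; nra.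
have hb : b = 0 by apply/eqP; rewrite -sqrf_eq0; apply/eqP; nra.
by rewrite ha hb.
Qed.

Lemma NcM a b : Nc (a * b) = Nc a * Nc b.
Proof. rewrite /Nc ReM ImM; ring. Qed.

Lemma Nc_ip z : Nc z = ip z z.
Proof. by rewrite /Nc /ip !expr2. Qed.

Lemma ip_sum a (I : Type) (r : seq I) (P : pred I) (F : I -> R[i]) :
  ip a (\sum_(i <- r | P i) F i) = \sum_(i <- r | P i) ip a (F i).
Proof. by rewrite /ip Re_sum Im_sum !mulr_sumr -big_split. Qed.

Lemma ip_if a (c : bool) b : ip a (if c then b else 0) = if c then ip a b else 0.
Proof. by case: c => //; rewrite /ip /= !mulr0 addr0. Qed.

Lemma Nc_sum_le (I : Type) (r : seq I) (F : I -> R[i]) :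
  Nc (\sum_(i <- r) F i) <= 2 ^+ size r * \sum_(i <- r) Nc (F i).
Proof.
elim: r => [|x r IH]; first by rewrite !big_nil /Nc /= expr0n mulr0 add0r.
rewrite !big_cons /= exprS.
have h1 : Nc (F x + \sum_(j <- r) F j) <= 2 * Nc (F x) + 2 * Nc (\sum_(j <- r) F j).
  rewrite /Nc ReD ImD.
  have := sqr_ge0 (complex.Re (F x) - complex.Re (\sum_(j <- r) F j)).
  have := sqr_ge0 (complex.Im (F x) - complex.Im (\sum_(j <- r) F j)).
  nra.
have h2 := Nc_ge0 (F x).
have h3 : 1 <= 2 ^+ size r :> R by rewrite exprn_ege1 // ler1n.
have h4 : Nc (F x) <= 2 ^+ size r * Nc (F x) by rewrite ler_peMl.
set s := \sum_(j <- r) Nc (F j) in IH *.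
set p := 2 ^+ size r in h3 h4 IH *.
lra.
Qed.


Lemma vnorm2E n (v : 'cV[R[i]]_n) : vnorm2 v = \sum_(k < n) Nc (v k 0).
Proof. by []. Qed.

Lemma vnorm2_ge0 n (v : 'cV[R[i]]_n) : 0 <= vnorm2 v.
Proof. by rewrite vnorm2E sumr_ge0 // => k _; apply: Nc_ge0. Qed.

Lemma vnorm2_eq0 n (v : 'cV[R[i]]_n) : vnorm2 v = 0 -> v = 0.
Proof.
rewrite vnorm2E => h; apply/matrixP => i j; rewrite ord1 mxE.
apply: Nc_eq0; apply: (psumr_eq0P _ h) => // k _; exact: Nc_ge0.
Qed.

Lemma vnorm2_scale n c (v : 'cV[R[i]]_n) : vnorm2 (Complex c 0 *: v) = c ^+ 2 * vnorm2 v.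
Proof.
rewrite !vnorm2E mulr_sumr; apply: eq_bigr => k _; rewrite mxE.
have -> : Nc (Complex c 0 * v k 0) = Nc (Complex c 0) * Nc (v k 0) by apply: NcM.
by rewrite /Nc /= expr0n addr0.
Qed.

Definition snset m n (M : 'M[R[i]]_(m, n)) :=
  [set Num.sqrt (vnorm2 (M *m v)) | v in [set v : 'cV[R[i]]_n | vnorm2 v = 1]]%classic.

Lemma specnormE m n (M : 'M[R[i]]_(m, n)) : specnorm M = sup (snset M).
Proof. by []. Qed.

Lemma snset_ub m n (M : 'M[R[i]]_(m, n)) : has_ubound (snset M).
Proof.
pose B := \sum_(i < m) 2 ^+ size (index_enum 'I_n) * \sum_(j < n) Nc (M i j).
exists (1 + B) => _ [v /= hv <-].
have hB : vnorm2 (M *m v) <= B.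
  rewrite vnorm2E /B; apply: ler_sum => i _; rewrite mxE.
  apply: le_trans (Nc_sum_le _ _) _; apply: ler_wpM2l; first by rewrite exprn_ge0.
  apply: ler_sum => j _; rewrite NcM.
  have : Nc (v j 0) <= 1.
    rewrite -hv vnorm2E (bigD1 j) //= lerDl; apply: sumr_ge0 => k _; exact: Nc_ge0.
  have := Nc_ge0 (M i j); nra.
have h0 := vnorm2_ge0 (M *m v).
have hs : Num.sqrt (vnorm2 (M *m v)) ^+ 2 = vnorm2 (M *m v) by rewrite sqr_sqrtr.
have := sqrtr_ge0 (vnorm2 (M *m v)).
set q := Num.sqrt _ in hs *; nra.
Qed.

Lemma specnorm_ge0 m n (M : 'M[R[i]]_(m, n)) : 0 <= specnorm M.
Proof.
rewrite specnormE; have [[[x hx] _]|nh] := pselect (has_sup (snset M)).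
  apply: le_trans (ub_le_sup (snset_ub M) hx).
  by case: hx => v _ <-; apply: sqrtr_ge0.
by rewrite sup_out.
Qed.

Lemma specnorm_le m n (M : 'M[R[i]]_(m, n)) v :
  vnorm2 (M *m v) <= specnorm M ^+ 2 * vnorm2 v.
Proof.
have [h0|hpos] := eqVneq (vnorm2 v) 0.
  by rewrite h0 mulr0 (vnorm2_eq0 h0) mulmx0 /vnorm2 big1 // => k _; rewrite mxE /Nc /= expr0n addr0.
have s0 : 0 < vnorm2 v by rewrite lt0r hpos vnorm2_ge0.
set s := vnorm2 v in s0 hpos *.
pose c := (Num.sqrt s)^-1.
have hc2 : c ^+ 2 = s^-1 by rewrite /c exprVn sqr_sqrtr // ltW.
have hw : vnorm2 (Complex c 0 *: v) = 1 by rewrite vnorm2_scale hc2 mulVf.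
have hin : snset M (Num.sqrt (vnorm2 (M *m (Complex c 0 *: v)))) by exists (Complex c 0 *: v).
have hle := ub_le_sup (snset_ub M) hin.
rewrite -specnormE -scalemxAr vnorm2_scale hc2 in hle.
have hsp := specnorm_ge0 M.
have hq0 : 0 <= s^-1 * vnorm2 (M *m v) by apply: mulr_ge0; [rewrite invr_ge0 ltW | apply: vnorm2_ge0].
have hq := sqr_sqrtr hq0.
have hsq := sqrtr_ge0 (s^-1 * vnorm2 (M *m v)).
have hss : s * s^-1 = 1 by rewrite mulfV.
set q := Num.sqrt _ in hle hq hsq.
set V := vnorm2 (M *m v) in hq0 hq *.
set K := specnorm M in hle hsp *.
have hqK : q ^+ 2 <= K ^+ 2 by rewrite ler_pXn2r // nnegrE.
rewrite hq in hqK.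
have -> : V = s * (s^-1 * V) by rewrite mulrA hss mul1r.
rewrite mulrC ler_wpM2r // ltW //.
Qed.

Lemma specnorm_ub m n (M : 'M[R[i]]_(m, n)) S : 0 <= S ->
  (forall v, vnorm2 v = 1 -> vnorm2 (M *m v) <= S) -> specnorm M ^+ 2 <= S.
Proof.
move=> S0 h.
have hle : specnorm M <= Num.sqrt S.
  rewrite specnormE; have [ne|e] := pselect (snset M !=set0)%classic.
    apply: ge_sup => // _ [v /= hv <-]; rewrite ler_sqrt //; exact: h.
  have -> : snset M = set0 by apply/eqP/negPn/negP => /set0P.
  by rewrite sup0 sqrtr_ge0.
have := specnorm_ge0 M; have := sqr_sqrtr S0; set q := Num.sqrt S in hle *.
set K := specnorm M in hle *; nra.
Qed.

End Aux.

Section Main.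
Variables (R : realType) (X Y : finType) (A : X -> Y -> R[i]).
Variable P : {set {set X} * {set Y}}.

Definition vec (T : finType) (X0 : {set T}) (f : T -> R[i]) : 'cV[R[i]]_#|X0| :=
  \col_(p < #|X0|) f (enum_val p).

Lemma vnorm2_vec (T : finType) (X0 : {set T}) (f : T -> R[i]) :
  vnorm2 (vec X0 f) = \sum_(x in X0) Nc (f x).
Proof.
rewrite vnorm2E [RHS]big_enum_val /=.
by apply: eq_bigr => k _; rewrite mxE.
Qed.

Lemma mul_vec (X0 : {set X}) (Y0 : {set Y}) (f : Y -> R[i]) :
  submx_of A X0 Y0 *m vec Y0 f = vec X0 (fun x => \sum_(y in Y0) A x y * f y).
Proof.
apply/matrixP => i j; rewrite !mxE [RHS]big_enum_val /=.
by apply: eq_bigr => k _; rewrite !mxE.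
Qed.

Hypothesis hP : rect_partition P.

Lemma partition_pt (V : zmodType) (p : X * Y) (F : V) :
  \sum_(r in P) (if p \in rect r then F else 0) = F.
Proof.
case: hP => dis cov.
have : p \in \bigcup_(r in P) rect r by rewrite cov finset.in_setT.
case/bigcupP => r0 r0P pr0.
rewrite (bigD1 r0) //= pr0 big1 ?addr0 // => r /andP[rP rne].
by rewrite (disjointFl (dis _ _ rP r0P rne) pr0).
Qed.

Lemma sum_rect (V : zmodType) (F : Y -> V) (r : {set X} * {set Y}) x :
  \sum_y (if (x, y) \in rect r then F y else 0) = if x \in r.1 then \sum_(y in r.2) F y else 0.
Proof.
rewrite /rect; case: ifP => xr.
  by rewrite [RHS]big_mkcond; apply: eq_bigr => y _; rewrite finset.in_setX xr.
by rewrite big1 // => y _; rewrite finset.in_setX xr.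
Qed.

Lemma part_sum2 (V : zmodType) (F : X -> Y -> V) :
  \sum_(r in P) \sum_(x in r.1) \sum_(y in r.2) F x y = \sum_x \sum_y F x y.
Proof.
transitivity (\sum_x \sum_y \sum_(r in P) (if (x, y) \in rect r then F x y else 0)).
  symmetry.
  under eq_bigr => x _ do rewrite exchange_big.
  rewrite exchange_big /=; apply: eq_bigr => r _.
  rewrite [RHS]big_mkcond; apply: eq_bigr => x _; exact: sum_rect.
by apply: eq_bigr => x _; apply: eq_bigr => y _; rewrite partition_pt.
Qed.

Lemma core (f : Y -> R[i]) : \sum_y Nc (f y) = 1 ->
  \sum_x Nc (\sum_y A x y * f y) <= \sum_(r in P) specnorm (submx_of A r.1 r.2) ^+ 2.
Proof.
move=> hf.
set g := fun x => \sum_y A x y * f y.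
pose h (r : {set X} * {set Y}) x := \sum_(y in r.2) A x y * f y.
pose s (r : {set X} * {set Y}) := \sum_(y in r.2) Nc (f y).
pose G (r : {set X} * {set Y}) := \sum_(x in r.1) Nc (g x).
pose I (r : {set X} * {set Y}) := \sum_(x in r.1) ip (g x) (h r x).
pose n2 (r : {set X} * {set Y}) := specnorm (submx_of A r.1 r.2) ^+ 2.
have decomp : forall x, g x = \sum_(r in P) (if x \in r.1 then h r x else 0).
  move=> x; rewrite /g.
  transitivity (\sum_y \sum_(r in P) (if (x, y) \in rect r then A x y * f y else 0)).
    by apply: eq_bigr => y _; rewrite partition_pt.
  rewrite exchange_big /=; apply: eq_bigr => r _; exact: sum_rect.
have hT : \sum_x Nc (g x) = \sum_(r in P) I r.
  transitivity (\sum_x \sum_(r in P) (if x \in r.1 then ip (g x) (h r x) else 0)).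
    apply: eq_bigr => x _; rewrite Nc_ip {2}decomp ip_sum.
    by apply: eq_bigr => r _; rewrite ip_if.
  by rewrite exchange_big /=; apply: eq_bigr => r _; rewrite [RHS]big_mkcond.
have hSG : \sum_(r in P) s r * G r = \sum_x Nc (g x).
  transitivity (\sum_(r in P) \sum_(x in r.1) \sum_(y in r.2) Nc (g x) * Nc (f y)).
    apply: eq_bigr => r _; rewrite /s /G mulrC big_distrl /=.
    by apply: eq_bigr => x _; rewrite big_distrr.
  rewrite part_sum2 /=; transitivity (\sum_x Nc (g x) * \sum_y Nc (f y)).
    by apply: eq_bigr => x _; rewrite big_distrr.
  by apply: eq_bigr => x _; rewrite hf mulr1.
have hR : forall r, r \in P -> 2 * I r <= s r * G r + n2 r.
  move=> r _.
  have hH : \sum_(x in r.1) Nc (h r x) <= n2 r * s r.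
    have := specnorm_le (submx_of A r.1 r.2) (vec r.2 f).
    by rewrite mul_vec !vnorm2_vec.
  have hquad : forall t, 0 <= t ^+ 2 * G r - 2 * t * I r + \sum_(x in r.1) Nc (h r x).
    move=> t.
    have -> : t ^+ 2 * G r - 2 * t * I r + \sum_(x in r.1) Nc (h r x) =
        \sum_(x in r.1) ((t * complex.Re (g x) - complex.Re (h r x)) ^+ 2 +
                         (t * complex.Im (g x) - complex.Im (h r x)) ^+ 2).
      rewrite /G /I mulr_sumr mulr_sumr -sumrB -big_split /=.
      by apply: eq_bigr => x _; rewrite /Nc /ip; ring.
    by apply: sumr_ge0 => x _; rewrite addr_ge0 // sqr_ge0.
  have hs0 : 0 <= s r by apply: sumr_ge0 => y _; exact: Nc_ge0.
  have hG0 : 0 <= G r by apply: sumr_ge0 => y _; exact: Nc_ge0.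
  have hn0 : 0 <= n2 r by rewrite /n2 sqr_ge0.
  have hH0 : 0 <= \sum_(x in r.1) Nc (h r x) by apply: sumr_ge0 => y _; exact: Nc_ge0.
  have [s0|spos] := eqVneq (s r) 0.
    have H0 : \sum_(x in r.1) Nc (h r x) = 0.
      by apply/eqP; rewrite eq_le hH0 andbT; rewrite s0 mulr0 in hH.
    have I0 : I r = 0.
      rewrite /I big1 // => x xr.
      have := psumr_eq0P (fun x _ => Nc_ge0 (h r x)) H0 xr.
      by move/Nc_eq0 => ->; rewrite /ip /= !mulr0 addr0.
    by rewrite I0 s0 mulr0 mul0r add0r.
  have hq := hquad (s r).
  set H := \sum_(x in r.1) Nc (h r x) in hH hq hH0.
  have sp : 0 < s r by rewrite lt0r spos hs0.
  set S := s r in sp hq hH hs0 spos *.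
  set GG := G r in hq hG0 *.
  set II := I r in hq *.
  set NN := n2 r in hH hn0 *.
  nra.
have : 2 * \sum_x Nc (g x) <= \sum_x Nc (g x) + \sum_(r in P) n2 r.
  rewrite {1}hT mulr_sumr -hSG -big_split /=; apply: ler_sum => r rP; exact: hR.
rewrite /n2; lra.
Qed.

End Main.

Lemma sum_setT (V : zmodType) (T : finType) (F : T -> V) :
  \sum_(x in [set: T]) F x = \sum_x F x.
Proof. by apply: eq_bigl => x; rewrite finset.in_setT. Qed.

Unset Implicit Arguments.
Set Strict Implicit.

Theorem mainTheorem3 (R : realType) (X Y : finType) (A : X -> Y -> R[i])
    (P : {set {set X} * {set Y}}) :
  rect_partition P ->
  specnorm (fullmx A) ^+ 2 <= \sum_(r in P) specnorm (submx_of A r.1 r.2) ^+ 2.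
Proof.
move=> hP.
apply: specnorm_ub.
  by apply: sumr_ge0 => r _; rewrite sqr_ge0.
move=> v hv.
pose f := fun y : Y => v (enum_rank_in (finset.in_setT y) y) 0.
have hvf : v = vec [set: Y] f.
  by apply/matrixP => i j; rewrite ord1 !mxE /f enum_valK_in.
rewrite /fullmx hvf mul_vec vnorm2_vec sum_setT.
rewrite hvf vnorm2_vec sum_setT in hv.
under eq_bigr do rewrite sum_setT.
exact: core.
Qed.
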